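(* Let $\mathbb{K}$ be a field, and let $\mathfrak{g}$ be one of $\mathfrak{so}_{2m+1}$, $\mathfrak{sp}_{2m}$ or $\mathfrak{so}_{2m}$, where $\mathrm{char}(\mathbb{K})\neq 2$ in the case $\mathfrak{g}=\mathfrak{so}_{2m+1}$. Let $\mathbf{U}_1=\mathbf{U}_1(\mathfrak{g})$, let $V$ be its vector representation, and for $d\in\mathbb{Z}_{\geq 0}$ set $T^d=V^{\otimes d}$. If $T^d$ is a non-semisimple $\mathbf{U}_1$-module, then $T^{d+2}$ is a non-semisimple $\mathbf{U}_1$-module.
   Context: $\mathbf{U}_1(\mathfrak{g})$ is the (Lusztig) quantized enveloping algebra of $\mathfrak{g}$ specialized at $q=1$ over $\mathbb{K}$; modules are finite-dimensional of type $1$ and tensor products carry the usual Hopf algebra action. The vector representation has dimension $2m+1$ for $\mathfrak{so}_{2m+1}$ and $2m$ otherwise. *)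

(* Defs.v *)
From HB Require Import structures.
From mathcomp Require Import all_boot all_order all_algebra.
Set Implicit Arguments. Unset Strict Implicit. Unset Printing Implicit Defensive.
Import Order.TTheory GRing.Theory Num.Theory.
Local Open Scope ring_scope.

(* The three classical types: so_{2m+1} (B), sp_{2m} (C), so_{2m} (D). *)
Inductive cls := TB | TC | TD.

Definition valid_rank (c : cls) (m : nat) : bool :=
  match c with TD => (1 < m)%N | _ => (0 < m)%N end.

Definition vdim (c : cls) (m : nat) : nat :=
  if c is TB then (m.*2).+1 else m.*2.

Definition bz (b : bool) : int := (b : nat)%:Z.

(* Integral (admissible lattice) matrices of the Chevalley generators E_i, F_i
   (i = 0..m-1 for the simple roots alpha_1..alpha_m, alpha_m being the
   special root) on the vector representation, w.r.t. a weight basis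
   w_0..w_(N-1) with weights eps_1,..,eps_m,(0),-eps_m,..,-eps_1.
   Column convention: [X a b] = coefficient of w_a in X(w_b).            *)
Definition Ecoef (c : cls) (m i a b : nat) : int :=
  let N := vdim c m in
  if (i.+1 < m)%N then bz ((a == i) && (b == i.+1)) - bz ((a == (N - 2 - i)%N) && (b == (N - 1 - i)%N))
  else match c with
  | TB => 2 * bz ((a == (m - 1)%N) && (b == m)) + bz ((a == m) && (b == m.+1))
  | TC => bz ((a == (m - 1)%N) && (b == m))
  | TD => bz ((a == (m - 2)%N) && (b == m)) - bz ((a == (m - 1)%N) && (b == m.+1))
  end.

Definition Fcoef (c : cls) (m i a b : nat) : int :=
  if (i.+1 < m)%N then Ecoef c m i b a
  else match c with
  | TB => bz ((a == m) && (b == (m - 1)%N)) + 2 * bz ((a == m.+1) && (b == m))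
  | _ => Ecoef c m i b a
  end.

Fixpoint mpow (N : nat) (X : nat -> nat -> int) (n : nat) (a b : nat) : int :=
  match n with
  | 0 => bz (a == b)
  | n'.+1 => \sum_(k < N) X a k * mpow N X n' k b
  end.

Definition dpow (N : nat) (X : nat -> nat -> int) (n a b : nat) : int :=
  (mpow N X n a b %/ (n`!)%:Z)%Z.

Definition gbin (h : int) (t : nat) : int :=
  ((\prod_(j < t) (h - j%:Z)) %/ (t`!)%:Z)%Z.

(* Value <alpha_i^vee, wt(w_u)>, i.e. the diagonal entry of H_i = [E_i, F_i]. *)
Definition hcoef (c : cls) (m i u : nat) : int :=
  \sum_(w < vdim c m) (Ecoef c m i u w * Fcoef c m i w u - Fcoef c m i u w * Ecoef c m i w u).

(* Basis of T^d = V^{(x) d}: tensors w_{s 0} (x) ... (x) w_{s (d-1)}. *)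
Definition tidx (c : cls) (m d : nat) := {ffun 'I_d -> 'I_(vdim c m)}.

Definition Tpow (K : fieldType) (c : cls) (m d : nat) := {ffun tidx c m d -> K^o}.

(* Action of Delta^{(d)}(X^{(n)}) = sum_{a_1+..+a_d = n} X^{(a_1)} (x) .. (x) X^{(a_d)}
   (the K_i act trivially on type-1 modules at q = 1). *)
Definition opT (K : fieldType) (c : cls) (m d : nat) (X : nat -> nat -> int) (n : nat)
  (s t : tidx c m d) : K :=
  (\sum_(a : {ffun 'I_d -> 'I_n.+1} | (\sum_(k < d) (a k : nat))%N == n)
     \prod_(k < d) dpow (vdim c m) X (a k) (s k) (t k))%:~R.

(* Action of the Cartan element [K_i; 0, t] : on a weight vector of weight
   lambda it acts by binom(<alpha_i^vee, lambda>, t). *)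
Definition opK (K : fieldType) (c : cls) (m d i t : nat) (s s' : tidx c m d) : K :=
  if s == s' then (gbin (\sum_(k < d) hcoef c m i (s k)) t)%:~R else 0.

Definition applyOp (K : fieldType) (c : cls) (m d : nat)
  (Op : tidx c m d -> tidx c m d -> K) (f : Tpow K c m d) : Tpow K c m d :=
  [ffun s => \sum_t Op s t * f t].

Definition stableOp (K : fieldType) (c : cls) (m d : nat)
  (U : {vspace Tpow K c m d}) (Op : tidx c m d -> tidx c m d -> K) : Prop :=
  forall f, f \in U -> applyOp Op f \in U.

(* U is a U_1(g)-submodule of T^d: stable under all generators
   E_i^{(n)}, F_i^{(n)}, [K_i; 0, n] of Lusztig's form at q = 1. *)
Definition is_submodule (K : fieldType) (c : cls) (m d : nat)
  (U : {vspace Tpow K c m d}) : Prop :=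
  forall (i : 'I_m) (n : nat),
    [/\ stableOp U (@opT K c m d (Ecoef c m i) n),
        stableOp U (@opT K c m d (Fcoef c m i) n)
      & stableOp U (@opK K c m d i n)].

Definition Tpow_semisimple (K : fieldType) (c : cls) (m d : nat) : Prop :=
  forall U : {vspace Tpow K c m d}, is_submodule U ->
    exists W : {vspace Tpow K c m d},
      [/\ is_submodule W, (U + W)%VS = fullv & (U :&: W)%VS = 0%VS].

(* Main.v *)
Require Import Defs.
From HB Require Import structures.
From mathcomp Require Import all_boot all_order all_algebra.
From mathcomp Require Import zify ring.
Import GRing.Theory.
Local Open Scope ring_scope.

Module Aux.
Set Implicit Arguments. Unset Strict Implicit.

Definition sig (c : cls) (m u : nat) : int :=
  match c with TB => if u == m then -1 else 2 | TC => if (u < m)%N then 1 else -1 | TD => 1 end.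

Definition ind (a b p q : nat) : int := bz ((a == p) && (b == q)).

Definition spec2 (X : nat -> nat -> int) p1 q1 (c1 : int) p2 q2 (c2 : int) :=
  forall a b, X a b = c1 * ind a b p1 q1 + c2 * ind a b p2 q2.

Record good (N : nat) (s : nat -> int) (X : nat -> nat -> int) := Good {
  g1 : forall a k l b, X a k * X k l * X l b = 0;
  g2 : forall a k b, (2 %| X a k * X k b)%Z;
  g3 : forall a b, (a < N)%N -> (b < N)%N -> X a b * s b = - (s a * X (N - 1 - b)%N (N - 1 - a)%N) }.

Lemma ind_mir N a b p q : (a < N)%N -> (b < N)%N -> (p < N)%N -> (q < N)%N ->
  ind (N - 1 - b)%N (N - 1 - a)%N p q = ind a b (N - 1 - q)%N (N - 1 - p)%N.
Proof.
move=> ha hb hp hq; rewrite /ind andbC.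
have E x y : (x < N)%N -> (y < N)%N -> (N - 1 - x == y)%N = (x == N - 1 - y)%N.
  by move=> hx hy; apply/eqP/eqP; lia.
by rewrite E // E.
Qed.

Lemma ind_sigr (f : nat -> int) a b p q : f b * ind a b p q = f q * ind a b p q.
Proof. by rewrite /ind; case: (a =P p) => //= _; case: (b =P q) => [->|] //=; rewrite !mulr0. Qed.
Lemma ind_sigl (f : nat -> int) a b p q : f a * ind a b p q = f p * ind a b p q.
Proof. by rewrite /ind; case: (a =P p) => [->|] //= _; rewrite !mulr0. Qed.

Lemma spec2_supp X p1 q1 c1 p2 q2 c2 a b : spec2 X p1 q1 c1 p2 q2 c2 -> p1 <> p2 ->
  X a b = 0 \/ (a = p1 /\ b = q1 /\ X a b = c1) \/ (a = p2 /\ b = q2 /\ X a b = c2).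
Proof.
move=> sp hp; rewrite sp /ind.
case: (a =P p1) => h1; case: (b =P q1) => h2 /=;
case: (a =P p2) => h3; case: (b =P q2) => h4 /=;
  rewrite ?mulr1 ?mulr0 ?addr0 ?add0r; try lia; auto.
Qed.

Lemma good_swap N s X p1 q1 c1 p2 q2 c2 :
  spec2 X p1 q1 c1 p2 q2 c2 -> (p1 < N)%N -> (q1 < N)%N -> (p2 < N)%N -> (q2 < N)%N ->
  p1 <> p2 -> (N - 1 - q1 = p2)%N -> (N - 1 - p1 = q2)%N ->
  c1 * s q1 = - (s p1 * c2) -> c2 * s q2 = - (s p2 * c1) ->
  (forall a k l b, ((a = p1 /\ k = q1) \/ (a = p2 /\ k = q2)) ->
     ((k = p1 /\ l = q1) \/ (k = p2 /\ l = q2)) -> ((l = p1 /\ b = q1) \/ (l = p2 /\ b = q2)) -> False) ->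
  (q1 = p2 -> (2 %| c1 * c2)%Z) -> (q2 = p1 -> (2 %| c2 * c1)%Z) ->
  (q1 <> p1) -> (q2 <> p2) ->
  good N s X.
Proof.
move=> sp h1 h2 h3 h4 hp m1 m2 e1 e2 ch ev1 ev2 n1 n2; split.
- move=> a k l b.
  case: (spec2_supp a k sp hp) => [->|A]; first by rewrite !mul0r.
  case: (spec2_supp k l sp hp) => [->|B]; first by rewrite mulr0 mul0r.
  case: (spec2_supp l b sp hp) => [->|C]; first by rewrite mulr0.
  exfalso; apply: (ch a k l b).
  + by case: A => [[? [? _]]|[? [? _]]]; [left|right].
  + by case: B => [[? [? _]]|[? [? _]]]; [left|right].
  + by case: C => [[? [? _]]|[? [? _]]]; [left|right].
- move=> a k b.
  case: (spec2_supp a k sp hp) => [->|A]; first by rewrite !mul0r.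
  case: (spec2_supp k b sp hp) => [->|B]; first by rewrite mulr0.
  case: A => [[? [? ->]]|[? [? ->]]]; case: B => [[? [? ->]]|[? [? ->]]];
  first [by exfalso; apply: n1; congruence | by exfalso; apply: n2; congruence | by apply: ev1; congruence | by apply: ev2; congruence].
- move=> a b ha hb.
  rewrite !sp (ind_mir ha hb h1 h2) (ind_mir ha hb h3 h4).
  have m3 : (N - 1 - q2 = p1)%N by clear -m2 h1; lia.
  have m4 : (N - 1 - p2 = q1)%N by clear -m1 h2; lia.
  rewrite m1 m2 m3 m4 !mulrDl !mulrDr -!mulrA [_ * s b]mulrC [_ * s b]mulrC.
  rewrite !ind_sigr !mulrA [s a * _]mulrC [s a * _]mulrC -!mulrA !ind_sigl !mulrA.
  rewrite e1 e2 [c2 * s p1]mulrC [c1 * s p2]mulrC.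
  rewrite !mulNr opprD addrC; congr (_ + _); by rewrite mulrC -mulNr.
Qed.

Lemma good_one N s X p1 q1 c1 :
  (forall a b, X a b = c1 * ind a b p1 q1) -> (p1 < N)%N -> (q1 < N)%N ->
  (N - 1 - q1 = p1)%N -> (N - 1 - p1 = q1)%N -> c1 * s q1 = - (s p1 * c1) -> q1 <> p1 ->
  good N s X.
Proof.
move=> sp h1 h2 m1 m2 e1 n1.
have sp2 : spec2 X p1 q1 c1 p1.+1 q1 0 by move=> a b; rewrite sp mul0r addr0.
have z2 a k b : X a k * X k b = 0.
  rewrite !sp /ind; case: (k =P q1) => [->|]; last by rewrite andbF mulr0 mul0r.
  by case: (q1 =P p1) => //=; rewrite !mulr0.
split.
- by move=> a k l b; rewrite z2 mul0r.
- by move=> a k b; rewrite z2.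
- move=> a b ha hb; rewrite !sp (ind_mir ha hb h1 h2) m1 m2.
  rewrite /ind; case: (a =P p1) => [->|] /=; last by rewrite !mulr0 mul0r oppr0.
  case: (b =P q1) => [->|] /=; last by rewrite !mulr0 mul0r oppr0.
  by rewrite !mulr1 e1.
Qed.

Ltac sbash := rewrite /sig /=; repeat (first [case: eqP => ? /= | case: ltnP => ? /=]); lia.

Lemma goodE c m (i : 'I_m) : valid_rank c m -> good (vdim c m) (sig c m) (Ecoef c m i).
Proof.
case: i => i hi /= hv; case h: (i.+1 < m)%N.
{ apply: (@good_swap _ _ _ i i.+1 1 (vdim c m - 2 - i)%N (vdim c m - 1 - i)%N (-1)).
  1: by move=> a b; rewrite /Ecoef h mul1r mulN1r.
  all: case: c hv => /= hv; try sbash.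
  all: try (move=> *; lia). }
case: c hv => /= hv.
{ apply: (@good_swap _ _ _ m.-1 m 2 m m.+1 1).
  1: by move=> a b; rewrite /Ecoef h /ind ?subn1 mul1r.
  all: try sbash.
  all: try (move=> *; lia).
  all: try by move=> _; apply/dvdzP; exists 1. }
{ apply: (@good_one _ _ _ m.-1 m 1).
  1: by move=> a b; rewrite /Ecoef h /ind ?subn1 mul1r.
  all: sbash. }
{ apply: (@good_swap _ _ _ m.-2 m 1 m.-1 m.+1 (-1)).
  1: by move=> a b; rewrite /Ecoef h /ind ?subn2 ?subn1 mul1r mulN1r.
  all: try sbash.
  all: try (move=> *; lia). }
Qed.

Lemma goodF c m (i : 'I_m) : valid_rank c m -> good (vdim c m) (sig c m) (Fcoef c m i).
Proof.
case: i => i hi /= hv; case h: (i.+1 < m)%N.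
{ apply: (@good_swap _ _ _ i.+1 i 1 (vdim c m - 1 - i)%N (vdim c m - 2 - i)%N (-1)).
  1: by move=> a b; rewrite /Fcoef /Ecoef h mul1r mulN1r /ind [(a == _) && _]andbC [(a == (_ - _)%N) && _]andbC.
  all: case: c hv => /= hv; try sbash.
  all: try (move=> *; lia). }
case: c hv => /= hv.
{ apply: (@good_swap _ _ _ m m.-1 1 m.+1 m 2).
  1: by move=> a b; rewrite /Fcoef h /ind ?subn1 mul1r.
  all: try sbash.
  all: try (move=> *; lia).
  all: try by move=> _; apply/dvdzP; exists 1. }
{ apply: (@good_one _ _ _ m m.-1 1).
  1: by move=> a b; rewrite /Fcoef /Ecoef h /ind ?subn1 mul1r andbC.
  all: sbash. }
{ apply: (@good_swap _ _ _ m m.-2 1 m.+1 m.-1 (-1)).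
  1: move=> a b; rewrite /Fcoef /Ecoef h /ind ?subn2 ?subn1 mul1r mulN1r.
  1: by rewrite [(a == _) && _]andbC [(a == m.+1) && _]andbC.
  all: try sbash.
  all: try (move=> *; lia). }
Qed.


Lemma sum_bz N (F : nat -> int) y : (y < N)%N ->
  \sum_(k < N) F k * bz ((k : nat) == y) = F y.
Proof.
move=> hy; rewrite (bigD1 (Ordinal hy)) //= eqxx mulr1 big1 ?addr0 // => k hk.
by case: eqP => [e|]; [ case/eqP: hk; apply: val_inj | rewrite mulr0].
Qed.

Lemma sum_bzl N (F : nat -> int) y : (y < N)%N ->
  \sum_(k < N) bz (y == (k : nat)) * F k = F y.
Proof.
by move=> hy; rewrite -(sum_bz F hy); apply: eq_bigr => k _; rewrite mulrC eq_sym.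
Qed.

Lemma mpow1 N X x y : mpow N X 1 x y = if (y < N)%N then X x y else 0.
Proof.
rewrite /=; case: ltnP => hy; first by rewrite sum_bz.
rewrite big1 // => k _; case: eqP => [e|]; last by rewrite mulr0.
by have := ltn_ord k; rewrite e; lia.
Qed.

Lemma mpow_add N X a b x y : (x < N)%N ->
  mpow N X (a + b) x y = \sum_(k < N) mpow N X a x k * mpow N X b k y.
Proof.
elim: a x => [|a IH] x hx.
  by rewrite add0n /= (sum_bzl (fun k => mpow N X b k y) hx).
rewrite addSn /=.
under eq_bigr do rewrite IH // mulr_sumr.
rewrite exchange_big /=; apply: eq_bigr => k _.
by rewrite mulr_suml; apply: eq_bigr => l _; rewrite mulrA.
Qed.

Lemma mpow3 N s X x y : good N s X -> mpow N X 3 x y = 0.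
Proof.
move=> g.
have -> : mpow N X 3 x y = \sum_(k < N) X x k * \sum_(l < N) X k l * mpow N X 1 l y by [].
rewrite big1 // => k _; rewrite mulr_sumr big1 // => l _.
rewrite mpow1; case: ifP => _; last by rewrite !mulr0.
by rewrite mulrA (g1 g).
Qed.

Lemma mpow_ge3 N s X n x y : good N s X -> (3 <= n)%N -> mpow N X n x y = 0.
Proof.
move=> g; elim: n x => [|n IH] x //; rewrite leq_eqVlt; case/orP => [/eqP <-|h].
  exact: (@mpow3 N s X _ _ g).
rewrite /= big1 // => k _; by rewrite IH // mulr0.
Qed.

Lemma mpow2_even N s X x y : good N s X -> (2 %| mpow N X 2 x y)%Z.
Proof.
move=> g.
have -> : mpow N X 2 x y = \sum_(k < N) X x k * mpow N X 1 k y by [].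
apply: rpred_sum => k _; rewrite mpow1; case: ifP => _; last by rewrite mulr0.
exact: (g2 g).
Qed.

Lemma fact_dvd N s X n x y : good N s X -> ((n`!)%:Z %| mpow N X n x y)%Z.
Proof.
move=> g; case: n => [|[|[|n]]].
- by rewrite dvd1z.
- by rewrite dvd1z.
- exact: (@mpow2_even N s X _ _ g).
- by rewrite (@mpow_ge3 N s X _ _ _ g) // dvdz0.
Qed.

Lemma Dfact N s X n x y : good N s X -> mpow N X n x y = (n`!)%:Z * dpow N X n x y.
Proof. by move=> g; rewrite /dpow mulrC divzK // (@fact_dvd N s X _ _ _ g). Qed.

Lemma sum_rev N (F : nat -> int) :
  \sum_(k < N) F k = \sum_(k < N) F (N - 1 - k)%N.
Proof.
rewrite (reindex_inj rev_ord_inj) /=; apply: eq_bigr => k _.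
by congr F; rewrite /=; lia.
Qed.

Lemma mpow_sig N s X n x y : good N s X -> (x < N)%N -> (y < N)%N ->
  mpow N X n x y * s y = (-1) ^+ n * s x * mpow N X n (N - 1 - y)%N (N - 1 - x)%N.
Proof.
move=> g; elim: n x => [|n IH] x hx hy.
  rewrite /= expr0 mul1r.
  case: (x =P y) => [<-|ne]; first by rewrite eqxx mul1r mulr1.
  case: (_ =P _) => [e|]; last by rewrite !mulr0 mul0r.
  by exfalso; apply: ne; lia.
have hy' : (N - 1 - y < N)%N by lia.
have hx' : (N - 1 - x < N)%N by lia.
have -> : mpow N X n.+1 (N - 1 - y) (N - 1 - x) = mpow N X (n + 1) (N - 1 - y) (N - 1 - x) by rewrite addn1.
rewrite (mpow_add _ _ _ _ hy') [mpow N X n.+1 x y]/= mulr_suml mulr_sumr.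
rewrite (sum_rev N (fun k => (-1) ^+ n.+1 * s x * (mpow N X n (N - 1 - y) k * mpow N X 1 k (N - 1 - x)))).
apply: eq_bigr => k _.
rewrite -mulrA IH // mpow1.
have hk' : (N - 1 - k < N)%N by lia.
rewrite hx'.
have e := (g3 g hx (ltn_ord k)).
transitivity ((-1) ^+ n * mpow N X n (N - 1 - y)%N (N - 1 - k)%N * (X x k * s k)); first ring.
rewrite e exprS; ring.
Qed.

Lemma fact_neq0 n : ((n`!)%:Z : int) != 0.
Proof. by rewrite -lt0n fact_gt0. Qed.

Lemma Dsig N s X n x y : good N s X -> (x < N)%N -> (y < N)%N ->
  dpow N X n x y * s y = (-1) ^+ n * s x * dpow N X n (N - 1 - y)%N (N - 1 - x)%N.
Proof.
move=> g hx hy; apply: (mulfI (fact_neq0 n)).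
rewrite mulrA -(Dfact _ _ _ g) (mpow_sig _ g hx hy) (Dfact _ _ _ g); ring.
Qed.

Lemma DD N s X a b x y : good N s X -> (x < N)%N ->
  \sum_(k < N) dpow N X a x k * dpow N X b k y = ('C(a + b, a))%:Z * dpow N X (a + b) x y.
Proof.
move=> g hx; apply: (mulfI (fact_neq0 a)); apply: (mulfI (fact_neq0 b)).
rewrite !mulr_sumr.
transitivity (\sum_(k < N) mpow N X a x k * mpow N X b k y).
  by apply: eq_bigr => k _; rewrite !(Dfact _ _ _ g); ring.
rewrite -mpow_add // (Dfact _ _ _ g) -(bin_fact (leq_addr b a)) addKn.
rewrite !PoszM; ring.
Qed.

Definition Om N (s : nat -> int) (p q : nat) : int := s p * bz (q == (N - 1 - p)%N).

Lemma alt_binom r : \sum_(i < r.+1) (-1) ^+ i * ('C(r, i))%:Z = bz (r == 0%N).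
Proof.
have e := exprDn (1 : int) (-1) r; rewrite subrr expr0n in e.
transitivity ((r == 0%N)%:R : int); last by rewrite /bz; case: (r == 0%N).
rewrite e; apply: eq_bigr => i _.
by rewrite expr1n mul1r -mulr_natr natz.
Qed.

Lemma invp N s X r x y : good N s X -> (x < N)%N -> (y < N)%N ->
  \sum_(i < r.+1) \sum_(p < N) \sum_(q < N)
     dpow N X i x p * dpow N X (r - i) y q * Om N s p q = bz (r == 0%N) * Om N s x y.
Proof.
move=> g hx hy.
have hx' : (N - 1 - x < N)%N by lia.
transitivity (\sum_(i < r.+1) (-1) ^+ i * ('C(r, i))%:Z * (s x * dpow N X r y (N - 1 - x)%N)).
  apply: eq_bigr => i _.
  have hir : (i <= r)%N by rewrite -ltnS.
  transitivity (\sum_(p < N) dpow N X i x p * s p * dpow N X (r - i) y (N - 1 - p)%N).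
    apply: eq_bigr => p _.
    have hp' : (N - 1 - p < N)%N by lia.
    rewrite -(sum_bz (fun q => dpow N X i x p * s p * dpow N X (r - i) y q) hp').
    by apply: eq_bigr => q _; rewrite /Om; ring.
  transitivity (\sum_(p < N) (-1) ^+ i * s x * (dpow N X (r - i) y (N - 1 - p)%N * dpow N X i (N - 1 - p)%N (N - 1 - x)%N)).
    apply: eq_bigr => p _; rewrite (Dsig _ g hx (ltn_ord p)); ring.
  rewrite -big_distrr /= -(sum_rev N (fun k => dpow N X (r - i) y k * dpow N X i k (N - 1 - x)%N)).
  rewrite (DD _ _ _ g hy) subnK // bin_sub //; ring.
rewrite -big_distrl /= alt_binom /Om /bz; case: (r =P 0%N) => [->|_] /=; last by rewrite !mul0r.
by rewrite /dpow /= divz1; ring.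
Qed.

Lemma swap_prod N s E F u w : good N s E -> good N s F -> (forall v, s v != 0) ->
  (u < N)%N -> (w < N)%N ->
  E u w * F w u = F (N - 1 - u)%N (N - 1 - w)%N * E (N - 1 - w)%N (N - 1 - u)%N.
Proof.
move=> gE gF s0 hu hw.
have h : s w * s u != 0 by rewrite mulf_neq0.
apply: (mulIf h).
have e1 := g3 gE hu hw; have e2 := g3 gF hw hu.
transitivity ((E u w * s w) * (F w u * s u)); first ring.
rewrite e1 e2; ring.
Qed.

Lemma hsym N s E F u : good N s E -> good N s F -> (forall v, s v != 0) -> (u < N)%N ->
  \sum_(w < N) (E u w * F w u - F u w * E w u) =
  - \sum_(w < N) (E (N - 1 - u)%N w * F w (N - 1 - u)%N - F (N - 1 - u)%N w * E w (N - 1 - u)%N).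
Proof.
move=> gE gF s0 hu.
rewrite (sum_rev N (fun w => E (N - 1 - u)%N w * F w (N - 1 - u)%N - F (N - 1 - u)%N w * E w (N - 1 - u)%N)).
rewrite -sumrN; apply: eq_bigr => w _.
rewrite (swap_prod gE gF s0 hu (ltn_ord w)) (swap_prod gF gE s0 hu (ltn_ord w)).
ring.
Qed.


Lemma prod_poly_coef d n (G : 'I_d -> nat -> int) :
  (\prod_(k < d) \sum_(j < n.+1) G k j *: 'X^j)`_n =
  \sum_(a : {ffun 'I_d -> 'I_n.+1} | (\sum_(k < d) (a k : nat) == n)%N) \prod_(k < d) G k (a k).
Proof.
rewrite bigA_distr_bigA /=.
under eq_bigr do rewrite scaler_prod prodrXr.
by rewrite coef_sumMXn.
Qed.

Lemma coef_trunc (G : nat -> int) M i :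
  (\sum_(j < M) G j *: 'X^j)`_i = if (i < M)%N then G i else 0.
Proof.
rewrite coef_sumMXn; case: ltnP => hi.
  by rewrite (big_pred1 (Ordinal hi)).
rewrite big1 // => j /eqP e; have := ltn_ord j; rewrite e; lia.
Qed.

Lemma prod_trunc I (r : seq I) (P Q : I -> {poly int}) j :
  (forall k i, (i <= j)%N -> (P k)`_i = (Q k)`_i) ->
  forall i, (i <= j)%N -> (\prod_(k <- r) P k)`_i = (\prod_(k <- r) Q k)`_i.
Proof.
move=> h.
apply: (big_ind2 (fun p q : {poly int} => forall i, (i <= j)%N -> p`_i = q`_i)) => //; last first.
  by move=> k _; exact: h.
move=> p1 q1 p2 q2 e1 e2 i hi; rewrite !coefM; apply: eq_bigr => l _.
have hl : (l <= j)%N by have := ltn_ord l; lia.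
by rewrite e1 // e2 //; lia.
Qed.

Definition Tg N X d n (S T : 'I_d -> nat) : int :=
  \sum_(a : {ffun 'I_d -> 'I_n.+1} | (\sum_(k < d) (a k : nat) == n)%N)
     \prod_(k < d) dpow N X (a k) (S k) (T k).

Definition PP N X M x y : {poly int} := \sum_(j < M) dpow N X j x y *: 'X^j.

Lemma Tg_poly N X d n S T : Tg N X n S T = (\prod_(k < d) PP N X n.+1 (S k) (T k))`_n.
Proof. by rewrite /PP (@prod_poly_coef d n (fun k j => dpow N X j (S k) (T k))). Qed.

Lemma Tg_trunc N X d n l S T : (l <= n)%N ->
  (\prod_(k < d) PP N X n.+1 (S k) (T k))`_l = Tg N X l S T.
Proof.
move=> hl; rewrite Tg_poly; apply: (@prod_trunc _ _ _ _ l) => // k i hi.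
rewrite /PP (coef_trunc (fun j => dpow N X j (S k) (T k))) (coef_trunc (fun j => dpow N X j (S k) (T k))).
have h1 : (i < n.+1)%N by lia. have h2 : (i < l.+1)%N by lia. by rewrite h1 h2.
Qed.

Definition ww d (k : 'I_d) : 'I_d.+2 := widen_ord (leqnSn d.+1) (widen_ord (leqnSn d) k).
Definition id1 d : 'I_d.+2 := widen_ord (leqnSn d.+1) ord_max.
Definition id2 d : 'I_d.+2 := ord_max.

Lemma T_split N X d n (S T : 'I_d.+2 -> nat) :
  Tg N X n S T = \sum_(l < n.+1) Tg N X l (fun k => S (ww k)) (fun k => T (ww k)) *
     \sum_(i < (n - l).+1) dpow N X i (S (id1 d)) (T (id1 d)) * dpow N X (n - l - i) (S (id2 d)) (T (id2 d)).
Proof.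
rewrite Tg_poly big_ord_recr big_ord_recr /= -mulrA coefM; apply: eq_bigr => l _.
have hl : (l <= n)%N by have := ltn_ord l; lia.
rewrite (Tg_trunc _ _ _ _ hl) coefM; congr (_ * _); apply: eq_bigr => i _.
have hi : (i <= n - l)%N by have := ltn_ord i; lia.
rewrite /PP (coef_trunc (fun j => dpow N X j (S (id1 d)) (T (id1 d)))) (coef_trunc (fun j => dpow N X j (S (id2 d)) (T (id2 d)))).
have h1 : (i < n.+1)%N by lia. have h2 : (n - l - i < n.+1)%N by lia. by rewrite h1 h2.
Qed.

Lemma key_int N s X n (Tl : nat -> int) x y : good N s X -> (x < N)%N -> (y < N)%N ->
  \sum_(p < N) \sum_(q < N) (\sum_(l < n.+1) Tl l *
     \sum_(i < (n - l).+1) dpow N X i x p * dpow N X (n - l - i) y q) * Om N s p q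
  = Tl n * Om N s x y.
Proof.
move=> g hx hy.
transitivity (\sum_(l < n.+1) Tl l * \sum_(i < (n - l).+1) \sum_(p < N) \sum_(q < N)
   dpow N X i x p * dpow N X (n - l - i) y q * Om N s p q).
  under eq_bigr => p _ do under eq_bigr => q _ do rewrite mulr_suml.
  under eq_bigr => p _ do rewrite exchange_big /=.
  rewrite exchange_big /=; apply: eq_bigr => l _.
  under eq_bigr => p _ do under eq_bigr => q _ do rewrite mulr_sumr mulr_suml.
  rewrite mulr_sumr; under [in RHS]eq_bigr => i _ do rewrite mulr_sumr.
  under [in RHS]eq_bigr => i _ do under eq_bigr => p _ do rewrite mulr_sumr.
  rewrite [in RHS]exchange_big /=; apply: eq_bigr => p _.
  rewrite [in RHS]exchange_big /=; apply: eq_bigr => q _.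
  apply: eq_bigr => i _; ring.
under eq_bigr => l _ do rewrite (invp _ g hx hy).
rewrite big_ord_recr /= subnn eqxx /= big1 ?add0r; first by rewrite /bz /= mul1r.
move=> l _; have := ltn_ord l => hl.
have h : ((n - l)%N == 0%N) = false by apply/negbTE/eqP; lia. by rewrite /bz h /= mul0r mulr0.
Qed.



Definition restr c m d (t : tidx c m d.+1) : tidx c m d :=
  [ffun k => t (widen_ord (leqnSn d) k)].
Definition ext c m d (u : tidx c m d) (p : 'I_(vdim c m)) : tidx c m d.+1 :=
  [ffun k => match unlift ord_max k with Some k' => u k' | None => p end].

Lemma widen_lift d (k : 'I_d) : widen_ord (leqnSn d) k = lift ord_max k.
Proof. by apply: val_inj; rewrite /= /bump leqNgt ltn_ord. Qed.

Lemma ext_widen c m d (u : tidx c m d) p k : ext u p (widen_ord (leqnSn d) k) = u k.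
Proof. by rewrite ffunE widen_lift liftK. Qed.

Lemma ext_max c m d (u : tidx c m d) p : ext u p ord_max = p.
Proof. by rewrite ffunE unlift_none. Qed.

Lemma restr_ext c m d (u : tidx c m d) p : restr (ext u p) = u.
Proof. by apply/ffunP => k; rewrite ffunE ext_widen. Qed.

Lemma ext_restr c m d (t : tidx c m d.+1) : ext (restr t) (t ord_max) = t.
Proof.
apply/ffunP => k; case: (unliftP ord_max k) => [j ->|->]; last by rewrite ext_max.
by rewrite -widen_lift ext_widen ffunE.
Qed.

Lemma sum_ext (V : nmodType) c m d (F : tidx c m d.+1 -> V) :
  \sum_(t : tidx c m d.+1) F t = \sum_(u : tidx c m d) \sum_(p : 'I_(vdim c m)) F (ext u p).
Proof.
rewrite pair_big (reindex (fun up : tidx c m d * 'I_(vdim c m) => ext up.1 up.2)) //=.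
apply: onW_bij; exists (fun t => (restr t, t ord_max)).
  by case=> u p /=; rewrite restr_ext ext_max.
by move=> t /=; rewrite ext_restr.
Qed.

Definition phi (K : fieldType) c m d (g : Tpow K c m d) : Tpow K c m d.+2 :=
  [ffun t : tidx c m d.+2 => g (restr (restr t)) *
     (Om (vdim c m) (sig c m) (t (id1 d)) (t (id2 d)))%:~R].

Lemma Tg_ext N X d n (S S' T T' : 'I_d -> nat) :
  (forall k, S k = S' k) -> (forall k, T k = T' k) -> Tg N X n S T = Tg N X n S' T'.
Proof. by move=> hS hT; apply: eq_bigr => a _; apply: eq_bigr => k _; rewrite hS hT. Qed.

Lemma ee_ww c m d (v : tidx c m d) p q k : ext (ext v p) q (ww k) = v k.
Proof. by rewrite /ww ext_widen ext_widen. Qed.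
Lemma ee_id1 c m d (v : tidx c m d) p q : ext (ext v p) q (id1 d) = p.
Proof. by rewrite /id1 ext_widen ext_max. Qed.
Lemma ee_id2 c m d (v : tidx c m d) p q : ext (ext v p) q (id2 d) = q.
Proof. by rewrite /id2 ext_max. Qed.
Lemma rr_ww c m d (t : tidx c m d.+2) k : restr (restr t) k = t (ww k).
Proof. by rewrite !ffunE. Qed.

Lemma sum_ext2 (V : nmodType) c m d (F : tidx c m d.+2 -> V) :
  \sum_(t : tidx c m d.+2) F t =
  \sum_(v : tidx c m d) \sum_(p : 'I_(vdim c m)) \sum_(q : 'I_(vdim c m)) F (ext (ext v p) q).
Proof.
rewrite sum_ext.
exact: (sum_ext (fun u : tidx c m d.+1 => \sum_(q : 'I_(vdim c m)) F (ext u q))).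
Qed.

Lemma phi_opT (K : fieldType) c m d X n (g : Tpow K c m d) :
  good (vdim c m) (sig c m) X ->
  applyOp (@opT K c m d.+2 X n) (phi g) = phi (applyOp (@opT K c m d X n) g).
Proof.
move=> gX; apply/ffunP => S; rewrite !ffunE.
rewrite sum_ext2.
set N := vdim c m; set s := sig c m.
set x := S (id1 d); set y := S (id2 d).
transitivity (\sum_(v : tidx c m d) g v * ((Tg N X n (fun k => S (ww k)) (fun k => v k)) * Om N s x y)%:~R).
  apply: eq_bigr => v _.
  transitivity (g v * (\sum_(p < N) \sum_(q < N) (\sum_(l < n.+1) Tg N X l (fun k => S (ww k)) (fun k => v k) *
     \sum_(i < (n - l).+1) dpow N X i x p * dpow N X (n - l - i) y q) * Om N s p q)%:~R).
    rewrite rmorph_sum mulr_sumr; apply: eq_bigr => p _.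
    rewrite rmorph_sum mulr_sumr; apply: eq_bigr => q _.
    rewrite /opT ffunE restr_ext restr_ext ee_id1 ee_id2.
    rewrite -[Z in Z%:~R * _]/(Tg N X n (fun k => S k) (fun k => ext (ext v p) q k)) T_split.
    rewrite /= !ee_id1 !ee_id2 rmorphM /=.
    under eq_bigr => l _ do rewrite (Tg_ext (S' := fun k => S (ww k)) (T' := fun k => v k) _ _ _ (fun k => erefl) (fun k => congr1 _ (ee_ww v p q k))).
    by rewrite [in RHS]rmorphM [in RHS]rmorphM mulrCA.
  by rewrite (key_int n (fun l => Tg N X l (fun k => S (ww k)) (fun k => v k)) gX (ltn_ord (S (id1 d))) (ltn_ord (S (id2 d)))).
rewrite mulr_suml; apply: eq_bigr => v _.
have -> : @opT K c m d X n (restr (restr S)) v = (Tg N X n (fun k => S (ww k)) (fun k => v k))%:~R.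
  change ((Tg N X n (fun k => restr (restr S) k) (fun k => v k))%:~R = (Tg N X n (fun k => S (ww k)) (fun k => v k))%:~R :> K).
  by congr (_%:~R); apply: Tg_ext => k //; rewrite rr_ww.
by rewrite rmorphM /=; ring.
Qed.

Lemma sum_diag (K : fieldType) (T : finType) (S : T) (c0 : K) (f : T -> K) :
  \sum_(t : T) (if S == t then c0 else 0) * f t = c0 * f S.
Proof.
rewrite (bigD1 S) //= eqxx big1 ?addr0 // => t ht.
by rewrite eq_sym (negbTE ht) mul0r.
Qed.

Lemma phi_opK (K : fieldType) c m d i n (g : Tpow K c m d) :
  (forall u, (u < vdim c m)%N -> hcoef c m i u + hcoef c m i (vdim c m - 1 - u)%N = 0) ->
  applyOp (@opK K c m d.+2 i n) (phi g) = phi (applyOp (@opK K c m d i n) g).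
Proof.
move=> hh; apply/ffunP => S; rewrite !ffunE /opK sum_diag sum_diag !ffunE.
rewrite /Om; case: (_ =P _) => [e|]; last by rewrite /bz /= mulr0 !mulr0.
rewrite mulrA; congr (_ * _ * _); congr (_%:~R); congr gbin.
rewrite big_ord_recr big_ord_recr /= -addrA.
have -> : hcoef c m i (S (widen_ord (leqnSn d.+1) ord_max)) + hcoef c m i (S ord_max) = 0.
  by rewrite e; apply: hh.
by rewrite addr0; apply: eq_bigr => k _; rewrite !ffunE.
Qed.

Lemma phi_lin (K : fieldType) c m d : linear (@phi K c m d).
Proof.
move=> a g h; apply/ffunP => t; rewrite !ffunE /=.
by rewrite mulrDl -mulrA.
Qed.


HB.instance Definition _ (K : fieldType) c m d :=
  GRing.isLinear.Build K (Tpow K c m d) (Tpow K c m d.+2) *:%R (@phi K c m d) (@phi_lin K c m d).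

Definition intertw K c m d :=
  forall (i : 'I_m) n,
    [/\ forall g : Tpow K c m d, applyOp (@opT K c m d.+2 (Ecoef c m i) n) (phi g) = phi (applyOp (@opT K c m d (Ecoef c m i) n) g),
        forall g : Tpow K c m d, applyOp (@opT K c m d.+2 (Fcoef c m i) n) (phi g) = phi (applyOp (@opT K c m d (Fcoef c m i) n) g)
      & forall g : Tpow K c m d, applyOp (@opK K c m d.+2 i n) (phi g) = phi (applyOp (@opK K c m d i n) g)].

Lemma ss_down K c m d : (forall g : Tpow K c m d, phi g = 0 -> g = 0) -> intertw K c m d ->
  Tpow_semisimple K c m d.+2 -> Tpow_semisimple K c m d.
Proof.
move=> inj hT ss U sU.
pose f := linfun (@phi K c m d).
have fE g : f g = phi g by rewrite lfunE.
have stab (W : {vspace Tpow K c m d.+2}) (Op : _ -> _ -> K) Op' :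
    (forall g, applyOp Op (phi g) = phi (applyOp Op' g)) ->
    stableOp W Op -> stableOp (f @^-1: W)%VS Op'.
  move=> e sW g; rewrite -!memv_preim !fE -e => hg; exact: sW.
have sU' : is_submodule (f @: U)%VS.
  move=> i n; have [e1 e2 e3] := hT i n.
  have st (Op : _ -> _ -> K) Op' : (forall g, applyOp Op (phi g) = phi (applyOp Op' g)) ->
      stableOp U Op' -> stableOp (f @: U)%VS Op.
    move=> e sO w /memv_imgP [u hu ->]; rewrite fE e -fE; apply: memv_img; exact: sO.
  have [s1 s2 s3] := sU i n.
  split; [exact: st (e1) s1 | exact: st (e2) s2 | exact: st (e3) s3].
have [W [sW hsum hcap]] := ss _ sU'.
exists (f @^-1: W)%VS; split.
- move=> i n; have [e1 e2 e3] := hT i n; have [s1 s2 s3] := sW i n.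
  split; [exact: stab _ _ _ e1 s1 | exact: stab _ _ _ e2 s2 | exact: stab _ _ _ e3 s3].
- apply/vspaceP => x; rewrite memvf.
  have : f x \in (f @: U + W)%VS by rewrite hsum memvf.
  case/memv_addP => a /memv_imgP [u hu ->] [b hb e].
  apply/memv_addP; exists u => //; exists (x - u); last by rewrite addrC subrK.
  by rewrite -memv_preim linearB /= e addrC addKr.
- apply/vspaceP => x; rewrite memv_cap memv0 -memv_preim.
  apply/andP/eqP => [[hx hw]|->]; last by rewrite mem0v linear0 mem0v.
  apply: inj; rewrite -fE; apply/eqP; rewrite -memv0 -hcap memv_cap hw andbT.
  exact: memv_img.
Qed.

Lemma sig_neq0 c m v : sig c m v != 0.
Proof. by case: c; rewrite /sig //; case: ifP. Qed.

Lemma hcoef_sym c m (i : 'I_m) : valid_rank c m ->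
  forall u, (u < vdim c m)%N -> hcoef c m i u + hcoef c m i (vdim c m - 1 - u)%N = 0.
Proof.
move=> hv u hu; rewrite /hcoef.
by rewrite (hsym (goodE i hv) (goodF i hv) (@sig_neq0 c m) hu) addNr.
Qed.

Lemma all_intertw K c m d : valid_rank c m -> intertw K c m d.
Proof.
move=> hv i n; split => g.
- exact: phi_opT (goodE i hv).
- exact: phi_opT (goodF i hv).
- exact: phi_opK (hcoef_sym i hv).
Qed.

Lemma phi_inj K c m d : valid_rank c m -> forall g : Tpow K c m d, phi g = 0 -> g = 0.
Proof.
move=> hv.
have [x0 hx] : exists x0 : 'I_(vdim c m), (sig c m x0 = 1) \/ (sig c m x0 = -1).
  case: c hv => /= hv.
  - have h : (m < m.*2.+1)%N by lia.
    by exists (Ordinal h); right; rewrite /sig /= eqxx.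
  - have h : (0 < m.*2)%N by lia.
    by exists (Ordinal h); left; rewrite /sig /= hv.
  - have h : (0 < m.*2)%N by lia.
    by exists (Ordinal h); left.
move=> g hg; apply/ffunP => v; rewrite ffunE.
have hy : (vdim c m - 1 - x0 < vdim c m)%N by have := ltn_ord x0; lia.
have := congr1 (fun G : Tpow K c m d.+2 => G (ext (ext v x0) (Ordinal hy))) hg.
rewrite /= ffunE restr_ext restr_ext ee_id1 ee_id2 ?ffunE /Om /= eqxx /bz /= mulr1.
move=> /eqP; rewrite mulf_eq0; case/orP => [/eqP //|].
by case: hx => ->; rewrite ?oppr_eq0 oner_eq0.
Qed.

End Aux.

Theorem proposition7p3 (K : fieldType) (c : cls) (m : nat)
  (hm : valid_rank c m)
  (hchar : c = TB -> (2 \notin [pchar K])%N)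
  (d : nat) :
  ~ Tpow_semisimple K c m d -> ~ Tpow_semisimple K c m d.+2.
Proof.
move=> hns hss; apply: hns; apply: Aux.ss_down hss.
- exact: Aux.phi_inj.
- exact: Aux.all_intertw.
Qed.
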